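(* Let $\beta\in\mathcal{A}$ and let $f=\sum_{\alpha\in\mathcal{A}}c_\alpha\mathrm{e}^\alpha\in C_X(\mathcal{A},\beta)$ with $c_\beta<0$. If a nonzero $\nu\in\mathbb{R}^{\mathcal{A}}$ satisfies $\mathbf{1}^T\nu=0$ and $\sigma_X(-\mathcal{A}\nu)+D(\nu_{\setminus\beta},e\,c_{\setminus\beta})\le c_\beta$, but $\nu$ is not an $X$-circuit of $\mathcal{A}$, then $f$ does not generate an extreme ray of $C_X(\mathcal{A},\beta)$.
   Context: $X\subset\mathbb{R}^n$ is a nonempty closed convex set and $\mathcal{A}\subset\mathbb{R}^n$ is a nonempty finite set such that the functions $x\mapsto\exp(\alpha^Tx)$, $\alpha\in\mathcal{A}$, are linearly independent on $X$. $\mathbb{R}^{\mathcal{A}}$ denotes real vectors indexed by $\mathcal{A}$; $c_{\setminus\beta}$ deletes the $\beta$-entry of $c$. $\mathcal{A}\nu=\sum_{\alpha}\alpha\nu_\alpha$. $\sigma_X(y)=\sup\{y^Tx:x\in X\}$. $N_\beta=\{\nu\in\mathbb{R}^{\mathcal{A}}:\nu_\alpha\ge0\ \forall\alpha\neq\beta,\ \sum_\alpha\nu_\alpha=0\}$. A vector $\nu^\star\in N_\beta$ is an $X$-circuit of $\mathcal{A}$ if (1) $\nu^\star\neq0$, (2) $\sigma_X(-\mathcal{A}\nu^\star)<\infty$, and (3) $\nu^\star$ cannot be written as a convex combination of two non-proportional vectors $\nu^{(1)},\nu^{(2)}\in N_\beta$ such that the map $\nu\mapsto\sigma_X(-\mathcal{A}\nu)$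 is affine on the segment $[\nu^{(1)},\nu^{(2)}]$. A signomial supported on $\mathcal{A}$ is $f=\sum_{\alpha}c_\alpha\mathrm{e}^\alpha$ with $\mathrm{e}^\alpha(x)=\exp(\alpha^Tx)$, identified with $c$. The $X$-AGE cone $C_X(\mathcal{A},\beta)$ is the set of signomials supported on $\mathcal{A}$ that are nonnegative on $X$ with $c_\alpha\ge0$ for all $\alpha\ne\beta$. The relative entropy is $D(\nu,c)=\sum_\alpha\nu_\alpha\log(\nu_\alpha/c_\alpha)$, continuously extended to nonnegative arguments, and $+\infty$ if $\nu$ or $c$ has a negative entry; $e$ is Euler's number. *)

(* Defs.v *)
From HB Require Import structures.
From mathcomp Require Import all_boot all_order all_algebra.
From mathcomp Require Import all_classical all_reals all_analysis.
Set Implicit Arguments. Unset Strict Implicit. Unset Printing Implicit Defensive.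
Import Order.TTheory GRing.Theory Num.Theory.
Import numFieldNormedType.Exports.
Local Open Scope classical_set_scope.
Local Open Scope ring_scope.

Definition dotv (R : realType) (n : nat) (a x : 'rV[R]_n) : R :=
  \sum_(k < n) a 0 k * x 0 k.

Definition supp_fun (R : realType) (n : nat) (X : set 'rV[R]_n) (y : 'rV[R]_n)
  : \bar R := ereal_sup [set (dotv y x)%:E | x in X].

(* The exponent set A is given as an injective family alpha : I -> R^n over a
   finite index type I; vectors in R^A are functions I -> R. *)
Definition Amul (R : realType) (n : nat) (I : finType) (alpha : I -> 'rV[R]_n)
  (nu : I -> R) : 'rV[R]_n := \sum_i nu i *: alpha i.

Definition signomial (R : realType) (n : nat) (I : finType) (alpha : I -> 'rV[R]_n)
  (c : I -> R) (x : 'rV[R]_n) : R := \sum_i c i * expR (dotv (alpha i) x).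

Definition exp_lin_indep (R : realType) (n : nat) (I : finType)
  (alpha : I -> 'rV[R]_n) (X : set 'rV[R]_n) : Prop :=
  forall c : I -> R, (forall x, X x -> signomial alpha c x = 0) -> forall i, c i = 0.

Definition Nbeta (R : realType) (I : finType) (b : I) (nu : I -> R) : Prop :=
  (forall i, i != b -> 0 <= nu i) /\ \sum_i nu i = 0.

Definition AGE_cone (R : realType) (n : nat) (I : finType) (alpha : I -> 'rV[R]_n)
  (X : set 'rV[R]_n) (b : I) (c : I -> R) : Prop :=
  (forall i, i != b -> 0 <= c i) /\ (forall x, X x -> 0 <= signomial alpha c x).

Definition proportional (R : realType) (I : finType) (u v : I -> R) : Prop :=
  (exists t : R, u = (fun i => t * v i)) \/ (exists t : R, v = (fun i => t * u i)).

Definition affine_on_segment (R : realType) (n : nat) (I : finType)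
  (alpha : I -> 'rV[R]_n) (X : set 'rV[R]_n) (nu1 nu2 : I -> R) : Prop :=
  exists a b : R, forall t : R, 0 <= t -> t <= 1 ->
    supp_fun X (- Amul alpha (fun i => t * nu1 i + (1 - t) * nu2 i)) = (a * t + b)%:E.

Definition X_circuit (R : realType) (n : nat) (I : finType) (alpha : I -> 'rV[R]_n)
  (X : set 'rV[R]_n) (b : I) (nu : I -> R) : Prop :=
  [/\ Nbeta b nu,
      nu <> (fun _ => 0),
      (supp_fun X (- Amul alpha nu) < +oo)%E &
      ~ (exists (nu1 nu2 : I -> R) (lam : R),
           [/\ Nbeta b nu1 /\ Nbeta b nu2, ~ proportional nu1 nu2,
               0 < lam < 1,
               nu = (fun i => lam * nu1 i + (1 - lam) * nu2 i) &
               affine_on_segment alpha X nu1 nu2])].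

(* one term x log(x/y) of the relative entropy, continuously extended,
   +oo when an argument is negative *)
Definition relent_term (R : realType) (x y : R) : \bar R :=
  if (x < 0) || (y < 0) then +oo%E
  else if x == 0 then 0%E
  else if y == 0 then +oo%E
  else (x * ln (x / y))%:E.

Definition relent_del (R : realType) (I : finType) (b : I) (nu c : I -> R) : \bar R :=
  (\sum_(i | i != b) relent_term (nu i) (expR 1 * c i))%E.

Definition extreme_ray (R : realType) (I : finType) (K : (I -> R) -> Prop)
  (f : I -> R) : Prop :=
  [/\ K f, f <> (fun _ => 0) &
      forall g h, K g -> K h -> f = (fun i => g i + h i) ->
        (exists2 t : R, 0 <= t & g = (fun i => t * f i)) /\
        (exists2 t : R, 0 <= t & h = (fun i => t * f i))].

(* Main.v *)
Require Import Defs.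
From HB Require Import structures.
From mathcomp Require Import all_boot all_order all_algebra.
From mathcomp Require Import all_classical all_reals all_analysis.
From mathcomp Require Import ring lra.
Import Order.TTheory GRing.Theory Num.Theory.
Import numFieldNormedType.Exports.
Local Open Scope classical_set_scope.
Local Open Scope ring_scope.

Lemma dotvNA (R : realType) (n : nat) (I : finType) (alpha : I -> 'rV[R]_n)
  (mu : I -> R) (x : 'rV[R]_n) :
  dotv (- Amul alpha mu) x = - \sum_i mu i * dotv (alpha i) x.
Proof.
rewrite /dotv /Amul.
under eq_bigr do rewrite mxE summxE mulNr mulr_suml.
rewrite sumrN; congr (- _).
rewrite exchange_big /=; apply: eq_bigr => i _.
rewrite mulr_sumr; apply: eq_bigr => k _.
by rewrite mxE mulrA.
Qed.

Lemma key_ineq (R : realType) (m d u : R) :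
  0 <= m -> 0 <= d -> (0 < m -> 0 < d) ->
  m * u - m * ln (m / (expR 1 * d)) <= d * expR u.
Proof.
move=> hm hd hmd.
have [->|m0] := eqVneq m 0.
  by rewrite !mul0r subrr mulr_ge0 // expR_ge0.
have mp : 0 < m by rewrite lt_neqAle eq_sym m0.
have dp := hmd mp.
set z := d * expR u.
have zp : 0 < z by rewrite mulr_gt0 // expR_gt0.
have h1 : ln (m / (expR 1 * d)) = ln m - (1 + ln d).
  rewrite ln_div ?posrE ?mulr_gt0 ?expR_gt0 //.
  by rewrite lnM ?posrE ?expR_gt0 // expRK.
have h2 : ln (z / m) = ln d + u - ln m.
  by rewrite ln_div ?posrE ?mulr_gt0 ?expR_gt0 // lnM ?posrE ?expR_gt0 // expRK.
have h3 : ln (z / m) <= z / m - 1.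
  have := @le_ln1Dx R (z / m - 1).
  rewrite addrCA subrr addr0; apply.
  by rewrite ltrBrDl subrr divr_gt0.
have h4 : m * ln (z / m) <= z - m.
  have := ler_wpM2l (ltW mp) h3.
  by rewrite mulrBr mulr1 mulrCA divff // mulr1.
rewrite h1; rewrite h2 in h4; lra.
Qed.
Lemma cert (R : realType) (n : nat) (X : set 'rV[R]_n) (I : finType)
  (alpha : I -> 'rV[R]_n) (b : I) (d mu : I -> R) (s : R)
  (hd : forall i, i != b -> 0 <= d i)
  (hmu : forall i, i != b -> 0 <= mu i)
  (hmd : forall i, i != b -> 0 < mu i -> 0 < d i)
  (hsum : \sum_i mu i = 0)
  (hs : forall x, X x -> dotv (- Amul alpha mu) x <= s)
  (hD : s + \sum_(i | i != b) mu i * ln (mu i / (expR 1 * d i)) <= d b) :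
  forall x, X x -> 0 <= signomial alpha d x.
Proof.
move=> x Xx.
set y := fun i => dotv (alpha i) x.
have hsx := hs x Xx; rewrite dotvNA -/y in hsx.
have hk : \sum_(i | i != b) (mu i * (y i - y b) - mu i * ln (mu i / (expR 1 * d i)))
   <= \sum_(i | i != b) d i * expR (y i - y b).
  by apply: ler_sum => i ib; apply: key_ineq; auto.
rewrite sumrB in hk.
have e1 : \sum_(i | i != b) mu i * (y i - y b) = \sum_i mu i * y i.
  have h0 : \sum_i mu i * (y i - y b) = \sum_i mu i * y i.
    under eq_bigr do rewrite mulrBr.
    by rewrite sumrB -mulr_suml hsum mul0r subr0.
  by rewrite -h0 [RHS](bigD1 b) //= subrr mulr0 add0r.
rewrite e1 in hk.
have hpos : 0 <= d b + \sum_(i | i != b) d i * expR (y i - y b) by lra.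
rewrite /signomial (bigD1 b) //=.
have -> : \sum_(i | i != b) d i * expR (dotv (alpha i) x)
   = (\sum_(i | i != b) d i * expR (y i - y b)) * expR (y b).
  rewrite mulr_suml; apply: eq_bigr => i _.
  by rewrite -mulrA -expRD subrK.
rewrite -/(y b).
rewrite -mulrDl.
by rewrite mulr_ge0 // expR_ge0.
Qed.
Lemma relent_term_neqNy (R : realType) (x y : R) : relent_term x y != -oo%E.
Proof. by rewrite /relent_term; repeat case: ifP. Qed.

Lemma relent_fin (R : realType) (I : finType) (b : I) (nu c : I -> R) (cb : R)
  (hc : forall i, i != b -> 0 <= c i) (S : \bar R) (hS : S != -oo%E)
  (h : (S + relent_del b nu c <= cb%:E)%E) :
  [/\ S != +oo%E, forall i, i != b -> 0 <= nu i,
      forall i, i != b -> 0 < nu i -> 0 < c i &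
      relent_del b nu c = (\sum_(i | i != b) nu i * ln (nu i / (expR 1 * c i)))%:E].
Proof.
have hDN : relent_del b nu c != -oo%E.
  apply/negP => /eqP /esum_eqNyP [i [_ _ /eqP]].
  by rewrite (negbTE (relent_term_neqNy _ _ _)).
have hDy : relent_del b nu c != +oo%E.
  apply/negP => /eqP hD; rewrite hD addey // in h.
have hSy : S != +oo%E.
  apply/negP => /eqP hS'; rewrite hS' addye // in h.
have ht : forall i, i != b -> relent_term (nu i) (expR 1 * c i) != +oo%E.
  move=> i ib; apply/negP => /eqP hi; move/negP: hDy; apply.
  apply/eqP; rewrite /relent_del; apply/esum_eqyP.
    by move=> j _; exact: relent_term_neqNy.
  by exists i; split => //; rewrite mem_index_enum.
have hnu : forall i, i != b -> 0 <= nu i.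
  move=> i ib; have := ht i ib; rewrite /relent_term.
  by case: ifPn => //; rewrite negb_or -leNgt => /andP[].
have hnc : forall i, i != b -> 0 < nu i -> 0 < c i.
  move=> i ib nup; have := ht i ib; rewrite /relent_term.
  rewrite ltNge (ltW nup) /= (gt_eqF nup).
  case: ifPn => // _; case: ifPn => // hne _.
  rewrite lt_neqAle hc // andbT; apply/negP => /eqP c0.
  by move: hne; rewrite -c0 mulr0 eqxx.
split => //.
rewrite /relent_del -sumEFin; apply: eq_bigr => i ib.
rewrite /relent_term.
have [n0|nup] := eqVneq (nu i) 0.
  by rewrite n0 ltxx /= mul0r ltNge mulr_ge0 ?expR_ge0 ?hc.
have np : 0 < nu i by rewrite lt_neqAle eq_sym nup hnu.
have cp := hnc i ib np.
rewrite ltNge (ltW np) /= ltNge (ltW (mulr_gt0 (expR_gt0 _) cp)) /=.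
by rewrite (gt_eqF (mulr_gt0 (expR_gt0 _) cp)).
Qed.
Lemma term_eq (R : realType) (m m' nu c cc : R) :
  0 <= m -> 0 <= m' -> nu = m + m' -> (0 < nu -> 0 < c) ->
  m * ln (m / (expR 1 * (if 0 < nu then c * m / nu else cc)))
  = m * ln (nu / (expR 1 * c)).
Proof.
move=> hm hm' hnu hc.
have [->|m0] := eqVneq m 0; first by rewrite !mul0r.
have mp : 0 < m by rewrite lt_neqAle eq_sym m0.
have np : 0 < nu by lra.
have cp := hc np.
rewrite np; congr (_ * ln _).
have e0 : expR 1 != 0 :> R by rewrite gt_eqF // expR_gt0.
field; rewrite ?gt_eqF //.
Qed.

Theorem theorem4p2 (R : realType) (n : nat) (X : set 'rV[R]_n)
  (I : finType) (alpha : I -> 'rV[R]_n)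
  (hXne : X !=set0) (hXcl : closed X) (hXcv : convex_set X)
  (halpha : injective alpha) (hlin : exp_lin_indep alpha X)
  (b : I) (c : I -> R) (hf : AGE_cone alpha X b c) (hcb : c b < 0)
  (nu : I -> R) (hnu0 : nu <> (fun _ => 0)) (hnusum : \sum_i nu i = 0)
  (hineq : (supp_fun X (- Amul alpha nu) + relent_del b nu c <= (c b)%:E)%E)
  (hncirc : ~ X_circuit alpha X b nu) :
  ~ extreme_ray (AGE_cone alpha X b) c.
Proof.
case=> hKc hc0 hext.
have hcnn : forall i, i != b -> 0 <= c i := hf.1.
have hSub : forall (m : I -> R) x, X x ->
    ((dotv (- Amul alpha m) x)%:E <= supp_fun X (- Amul alpha m))%E.
  by move=> m x Xx; apply: ereal_sup_ubound; exists x.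
have hSN : supp_fun X (- Amul alpha nu) != -oo%E.
  case: hXne => x0 X0; apply/negP => /eqP hS.
  by have := hSub nu x0 X0; rewrite hS.
have [hSy hnu hnc hD] := @relent_fin _ _ _ _ _ _ hcnn _ hSN hineq.
have hNb : Nbeta b nu by split.
have hlt : (supp_fun X (- Amul alpha nu) < +oo)%E by rewrite ltey.
have hE := fun nE => hncirc (And4 hNb hnu0 hlt nE).
have := contrapT hE.
case=> nu1 [nu2 [lam [[[N1a N1s] [N2a N2s]] nprop /andP[l0 l1] hnueq [a [b0 haff]]]]].
have hb1 : forall x, X x -> - \sum_i nu1 i * dotv (alpha i) x <= a + b0.
  move=> x Xx; have := hSub (fun i => 1 * nu1 i + (1 - 1) * nu2 i) x Xx.
  rewrite haff ?ler01 //.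
  have -> : (fun i => 1 * nu1 i + (1 - 1) * nu2 i) = nu1.
    by apply/funext=> i; rewrite subrr mul0r addr0 mul1r.
  by rewrite mulr1 lee_fin dotvNA.
have hb2 : forall x, X x -> - \sum_i nu2 i * dotv (alpha i) x <= b0.
  move=> x Xx; have := hSub (fun i => 0 * nu1 i + (1 - 0) * nu2 i) x Xx.
  rewrite haff ?ler01 ?lexx //.
  have -> : (fun i => 0 * nu1 i + (1 - 0) * nu2 i) = nu2.
    by apply/funext=> i; rewrite subr0 mul0r add0r mul1r.
  by rewrite mulr0 add0r lee_fin dotvNA.
have hSe : supp_fun X (- Amul alpha nu) = (a * lam + b0)%:E.
  by rewrite hnueq haff ?ltW.
rewrite hSe hD -EFinD lee_fin in hineq.
have hnui : forall i, nu i = lam * nu1 i + (1 - lam) * nu2 i.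
  by move=> i; rewrite {1}hnueq.
have hm1 : forall i, i != b -> 0 <= lam * nu1 i.
  by move=> i ib; apply: mulr_ge0; [exact: ltW | exact: N1a].
have hm2 : forall i, i != b -> 0 <= (1 - lam) * nu2 i.
  by move=> i ib; apply: mulr_ge0; [rewrite subr_ge0 ltW | exact: N2a].
set L := fun i => ln (nu i / (expR 1 * c i)).
set D1 := \sum_(i | i != b) (lam * nu1 i) * L i.
set D2 := \sum_(i | i != b) ((1 - lam) * nu2 i) * L i.
have hDs : \sum_(i | i != b) nu i * ln (nu i / (expR 1 * c i)) = D1 + D2.
  rewrite /D1 /D2 -big_split /=; apply: eq_bigr => i _.
  by rewrite -mulrDl -hnui.
rewrite hDs in hineq.
pose c1 := fun i => if i == b then lam * (a + b0) + D1
  else if 0 < nu i then c i * (lam * nu1 i) / nu i else c i.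
pose c2 := fun i => if i == b then c b - (lam * (a + b0) + D1)
  else if 0 < nu i then c i * ((1 - lam) * nu2 i) / nu i else 0.
have hK1 : AGE_cone alpha X b c1.
  have hd : forall i, i != b -> 0 <= c1 i.
    move=> i ib; rewrite /c1 (negbTE ib); case: ifP => np; last exact: hcnn.
    by apply: divr_ge0; [apply: mulr_ge0; [exact: hcnn|exact: hm1]|exact: ltW].
  split => //.
  apply: (@cert R n X I alpha b c1 (fun i => lam * nu1 i) (lam * (a + b0))) => //.
  - move=> i ib /= mp; have np : 0 < nu i by have := hm2 i ib; rewrite hnui; lra.
    by rewrite /c1 (negbTE ib) np; apply: divr_gt0 => //; apply: mulr_gt0 => //; exact: hnc.
  - by rewrite -mulr_sumr N1s mulr0.
  - move=> x Xx; rewrite dotvNA.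
    under eq_bigr do rewrite -mulrA.
    rewrite -mulr_sumr -mulrN; apply: ler_wpM2l; [exact: ltW | exact: hb1].
  - rewrite /c1 eqxx lerD2l /D1; rewrite le_eqVlt; apply/orP; left; apply/eqP/eq_bigr => i ib.
    rewrite (negbTE ib); apply: (@term_eq R _ _ _ _ _ (hm1 i ib) (hm2 i ib) (hnui i)).
    exact: hnc.
have hK2 : AGE_cone alpha X b c2.
  have hd : forall i, i != b -> 0 <= c2 i.
    move=> i ib; rewrite /c2 (negbTE ib); case: ifP => np //.
    by apply: divr_ge0; [apply: mulr_ge0; [exact: hcnn|exact: hm2]|exact: ltW].
  split => //.
  apply: (@cert R n X I alpha b c2 (fun i => (1 - lam) * nu2 i) ((1 - lam) * b0)) => //.
  - move=> i ib /= mp; have np : 0 < nu i by have := hm1 i ib; rewrite hnui; lra.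
    by rewrite /c2 (negbTE ib) np; apply: divr_gt0 => //; apply: mulr_gt0 => //; exact: hnc.
  - by rewrite -mulr_sumr N2s mulr0.
  - move=> x Xx; rewrite dotvNA.
    under eq_bigr do rewrite -mulrA.
    rewrite -mulr_sumr -mulrN; apply: ler_wpM2l; [by rewrite subr_ge0 ltW | exact: hb2].
  - have -> : \sum_(i | i != b) (1 - lam) * nu2 i *
        ln ((1 - lam) * nu2 i / (expR 1 * c2 i)) = D2.
      rewrite /D2; apply/eq_bigr => i ib.
      rewrite /c2 (negbTE ib).
      apply: (@term_eq R _ _ _ _ _ (hm2 i ib) (hm1 i ib) _ (hnc i ib)).
      by rewrite hnui addrC.
    rewrite /c2 eqxx; nra.
have hsplit : c = (fun i => c1 i + c2 i).
  apply/funext => i; rewrite /c1 /c2; case: eqP => [->|_]; first by rewrite subrKC.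
  case: ifP => np; last by rewrite addr0.
  by rewrite -mulrDl -mulrDr -hnui mulfK // gt_eqF.
have [[t t0 ht] _] := hext c1 c2 hK1 hK2 hsplit.
have hmo : forall i, i != b -> lam * nu1 i = t * nu i.
  move=> i ib; have := congr1 (fun f => f i) ht; rewrite /c1 (negbTE ib) /=.
  case: ifP => np e.
    have cp := hnc i ib np.
    apply: (mulfI (negbT (gt_eqF cp))).
    rewrite -(divfK (negbT (gt_eqF np)) (c i * (lam * nu1 i))) e; ring.
  have := hm1 i ib; have := hm2 i ib; have := hnui i; move/negbT: np.
  rewrite -leNgt => np e1 e2 e3.
  have n0 : nu i = 0 by have := hnu i ib; lra.
  rewrite n0 mulr0; lra.
have hmb : lam * nu1 b = t * nu b.
  have e1 : lam * nu1 b = - (t * \sum_(i | i != b) nu i).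
    have : \sum_i lam * nu1 i = 0 by rewrite -mulr_sumr N1s mulr0.
    rewrite (bigD1 b) //= mulr_sumr (eq_bigr _ hmo) => h; lra.
  have e2 : nu b = - \sum_(i | i != b) nu i.
    by move: hnusum; rewrite (bigD1 b) //= => h; lra.
  by rewrite e1 e2 mulrN.
have hall : forall i, lam * nu1 i = t * nu i.
  by move=> i; case: (eqVneq i b) => [->|ib]; [exact: hmb|exact: hmo].
apply: nprop.
have l0' : lam != 0 by rewrite gt_eqF.
have l1' : 1 - lam != 0 by rewrite gt_eqF // subr_gt0.
have [t0'|tn0] := eqVneq t 0.
  left; exists 0; apply/funext => i; rewrite mul0r.
  by have := hall i; rewrite t0' mul0r => /eqP; rewrite mulf_eq0 (negbTE l0') => /eqP.
right; exists ((1 - t) * lam / ((1 - lam) * t)); apply/funext => i.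
have e3 : nu2 i = (nu i - lam * nu1 i) / (1 - lam).
  by rewrite hnui; field.
have e4 : nu i = lam * nu1 i / t by rewrite hall; field.
by rewrite e3 e4; field; rewrite tn0 l1'.
Qed.
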